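(* Consider a slender, possibly compressible/extensible filament moving in the plane (the $x$–$y$ plane) in an inertialess medium described by resistive force theory, with isotropic drag, i.e. $\gamma := C_\perp / C_\parallel = 1$. Let the filament be parametrised by a Lagrangian label $s_0 \in [0, L_0]$ (arc length in a reference configuration of length $L_0$), with current arc length $s = s(s_0,t)$ satisfying $\partial s/\partial s_0 = 1 + \eta\, p(s_0,t)$ for a constant $\eta$ and a prescribed function $p$, so that the current length is $L(t) = \int_0^{L_0}(1+\eta p(s_0,t))\,\mathrm{d}s_0$. Let $\bm{x}(s,t)$ denote the position in the laboratory frame of the material point with current arc length $s$, and define the centre of geometry $$\overline{\bm{X}}(t) = \frac{1}{L(t)} \int_0^{L(t)} \bm{x}(s,t)\,\mathrm{d}s .$$ Then: (i) if the compression is spatially uniform, i.e. $\partial p/\partial s_0 = 0$ for all times, then $\mathrm{d}\overline{\bm{X}}/\mathrm{d}t = \bm{0}$ for all times, so no net motion is possible; (ii) otherwise (if $\partial p/\partial s_0 \neq 0$), net motion is possible, i.e. $\mathrm{d}\overline{\bm{X}}/\mathrm{d}t$ need not vanish.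
   Context: Kinematics: the shape of the filament in a body-fixed frame is prescribed (through the compression function $p(s_0,t)$ above and a prescribed tangent-angle function $\tilde\theta(s_0,t)$ giving the body-frame position $\tilde{\bm{x}}(s_0,t)$); the laboratory position is $\bm{x} = \bm{X}(t) + \mathbf{R}_{\Theta(t)}\tilde{\bm{x}}(s_0,t)$, where $\bm{X}(t)$ and the rotation angle $\Theta(t)$ (with $\mathbf{R}_\Theta$ the planar rotation matrix) are unknowns of the rigid-body motion. The local velocity of a material point is the Lagrangian derivative $D\bm{x}/Dt = \partial \bm{x}(s_0,t)/\partial t$ at fixed $s_0$. Resistive force theory: the force per unit (current) length exerted by the medium on the filament is $\bm{f} = -C_\parallel\,(\tfrac{D\bm{x}}{Dt}\cdot \bm{e}_\parallel)\,\bm{e}_\parallel - C_\perp\,(\tfrac{D\bm{x}}{Dt}\cdot \bm{e}_\perp)\,\bm{e}_\perp$, where $\bm{e}_\parallel, \bm{e}_\perp$ are the local unit tangent and normal vectors and $C_\parallel, C_\perp > 0$ are the tangential and normal drag coefficients; isotropic drag $\gamma = 1$ means $C_\parallel = C_\perp = C$, so $\bm{f} = -C\, D\bm{x}/Dt$. Dynamics: the rigid motion $(\bm{X}(t),\Theta(t))$ is determined by the force-free and torque-free conditions $\int_0^{L(t)} \bm{f}\,\mathrm{d}s = \bm{0}$ and $\int_0^{L(t)} \tilde{\bm{x}} \times \tilde{\bm{f}}\,\mathrm{d}s = \bm{0}$ at every time (no external forces or torques). *)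

(* Defs.v *)
From Stdlib Require Import Reals.
From Coquelicot Require Import Coquelicot.
Open Scope R_scope.

Definition C1_2 (f : R -> R -> R) : Prop :=
  forall x y,
    ex_derive (fun u => f u y) x /\ ex_derive (fun v => f x v) y /\
    continuity_2d_pt f x y /\
    continuity_2d_pt (fun u v => Derive (fun w => f w v) u) x y /\
    continuity_2d_pt (fun u v => Derive (fun w => f u w) v) x y.

Definition differentiable (g : R -> R) : Prop := forall t, ex_derive g t.

(* ds/ds0 = 1 + eta p(s0,t) *)
Definition stretch (eta : R) (p : R -> R -> R) (s0 t : R) : R := 1 + eta * p s0 t.

Definition curlen (L0 eta : R) (p : R -> R -> R) (t : R) : R :=
  RInt (fun s0 => stretch eta p s0 t) 0 L0.

(* body-frame position obtained from the tangent angle th(s0,t):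
   x~(s0,t) = int_0^s0 (1 + eta p(sg,t)) (cos th(sg,t), sin th(sg,t)) dsg *)
Definition xbody1 eta p (th : R -> R -> R) s0 t : R :=
  RInt (fun sg => stretch eta p sg t * cos (th sg t)) 0 s0.
Definition xbody2 eta p (th : R -> R -> R) s0 t : R :=
  RInt (fun sg => stretch eta p sg t * sin (th sg t)) 0 s0.

(* laboratory position x = X(t) + R_{Theta(t)} x~(s0,t) *)
Definition xlab1 (X1 Th : R -> R) eta p th s0 t : R :=
  X1 t + cos (Th t) * xbody1 eta p th s0 t - sin (Th t) * xbody2 eta p th s0 t.
Definition xlab2 (X2 Th : R -> R) eta p th s0 t : R :=
  X2 t + sin (Th t) * xbody1 eta p th s0 t + cos (Th t) * xbody2 eta p th s0 t.

Definition vel1 X1 Th eta p th s0 t : R :=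
  Derive (fun tau => xlab1 X1 Th eta p th s0 tau) t.
Definition vel2 X2 Th eta p th s0 t : R :=
  Derive (fun tau => xlab2 X2 Th eta p th s0 tau) t.

Definition epar1 (Th : R -> R) (th : R -> R -> R) s0 t := cos (Th t + th s0 t).
Definition epar2 (Th : R -> R) (th : R -> R -> R) s0 t := sin (Th t + th s0 t).
Definition eperp1 (Th : R -> R) (th : R -> R -> R) s0 t := - sin (Th t + th s0 t).
Definition eperp2 (Th : R -> R) (th : R -> R -> R) s0 t := cos (Th t + th s0 t).

Definition rft1 Cpar Cperp X1 X2 Th eta p th s0 t : R :=
  let v1 := vel1 X1 Th eta p th s0 t in
  let v2 := vel2 X2 Th eta p th s0 t in
  let vpar := v1 * epar1 Th th s0 t + v2 * epar2 Th th s0 t in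
  let vperp := v1 * eperp1 Th th s0 t + v2 * eperp2 Th th s0 t in
  - Cpar * vpar * epar1 Th th s0 t - Cperp * vperp * eperp1 Th th s0 t.
Definition rft2 Cpar Cperp X1 X2 Th eta p th s0 t : R :=
  let v1 := vel1 X1 Th eta p th s0 t in
  let v2 := vel2 X2 Th eta p th s0 t in
  let vpar := v1 * epar1 Th th s0 t + v2 * epar2 Th th s0 t in
  let vperp := v1 * eperp1 Th th s0 t + v2 * eperp2 Th th s0 t in
  - Cpar * vpar * epar2 Th th s0 t - Cperp * vperp * eperp2 Th th s0 t.

Definition rftb1 Cpar Cperp X1 X2 Th eta p th s0 t : R :=
  cos (Th t) * rft1 Cpar Cperp X1 X2 Th eta p th s0 t
  + sin (Th t) * rft2 Cpar Cperp X1 X2 Th eta p th s0 t.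
Definition rftb2 Cpar Cperp X1 X2 Th eta p th s0 t : R :=
  - sin (Th t) * rft1 Cpar Cperp X1 X2 Th eta p th s0 t
  + cos (Th t) * rft2 Cpar Cperp X1 X2 Th eta p th s0 t.

(* ---------- dynamics: force-free and torque-free at every time ----------
   integrals over current arclength s in [0,L(t)] are written in the
   Lagrangian variable via ds = (1 + eta p) ds0. *)
Definition force_torque_free L0 eta p th Cpar Cperp X1 X2 Th : Prop :=
  forall t,
    RInt (fun s0 => rft1 Cpar Cperp X1 X2 Th eta p th s0 t * stretch eta p s0 t) 0 L0 = 0 /\
    RInt (fun s0 => rft2 Cpar Cperp X1 X2 Th eta p th s0 t * stretch eta p s0 t) 0 L0 = 0 /\
    RInt (fun s0 =>
            (xbody1 eta p th s0 t * rftb2 Cpar Cperp X1 X2 Th eta p th s0 t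
             - xbody2 eta p th s0 t * rftb1 Cpar Cperp X1 X2 Th eta p th s0 t)
            * stretch eta p s0 t) 0 L0 = 0.

Definition Xbar1 L0 eta p th X1 Th (t : R) : R :=
  / curlen L0 eta p t *
  RInt (fun s0 => xlab1 X1 Th eta p th s0 t * stretch eta p s0 t) 0 L0.
Definition Xbar2 L0 eta p th X2 Th (t : R) : R :=
  / curlen L0 eta p t *
  RInt (fun s0 => xlab2 X2 Th eta p th s0 t * stretch eta p s0 t) 0 L0.

Definition admissible L0 eta (p th : R -> R -> R) Cpar Cperp (X1 X2 Th : R -> R) : Prop :=
  0 < L0 /\ 0 < Cpar /\ 0 < Cperp /\
  C1_2 p /\ C1_2 th /\
  differentiable X1 /\ differentiable X2 /\ differentiable Th /\
  (forall s0 t, 0 <= s0 <= L0 -> 0 < stretch eta p s0 t).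

(* Main.v *)
Require Import Defs.
From Stdlib Require Import Reals Lra.
From Coquelicot Require Import Coquelicot.
Open Scope R_scope.
Ltac rg := do 3 (unfold minus, plus, scal, opp, mult, zero, one; simpl).
Ltac rs := do 3 (unfold minus, plus, scal, opp, mult, zero, one in *; simpl in *).

Lemma is_derive_eq (f : R -> R) x l l' : is_derive f x l -> l = l' -> is_derive f x l'.
Proof. intros H <-; exact H. Qed.
Lemma is_RInt_eq (f : R -> R) a b l l' : is_RInt f a b l -> l = l' -> is_RInt f a b l'.
Proof. intros H <-; exact H. Qed.

Lemma c2d_swap f x y : continuity_2d_pt f x y -> continuity_2d_pt (fun u v => f v u) y x.
Proof. intros H eps; destruct (H eps) as [d Hd]; exists d; intros u v Hu Hv; apply Hd; auto. Qed.

Lemma c2d_cont1 f x y : continuity_2d_pt f x y -> continuous (fun u => f u y) x.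
Proof.
  intros H. apply continuity_pt_filterlim. apply continuity_pt_locally. intros eps.
  destruct (H eps) as [d Hd]. exists d. intros u Hu. apply Hd. exact Hu.
  rewrite Rminus_eq_0, Rabs_R0; apply cond_pos.
Qed.

Lemma c2d_cont2 f x y : continuity_2d_pt f x y -> continuous (fun v => f x v) y.
Proof. intros H. apply (c2d_cont1 (fun u v => f v u)). apply c2d_swap; exact H. Qed.

Lemma swap_int (h : R -> R) (L0 : R) (Hh : forall x, continuous h x) :
  is_RInt (fun s0 => RInt h 0 s0) 0 L0 (RInt (fun s => (L0 - s) * h s) 0 L0).
Proof.
  assert (Hint : forall a b, ex_RInt h a b).
  { intros; apply (ex_RInt_continuous (V:=R_CompleteNormedModule)); intros; apply Hh. }
  assert (HD : forall s, is_derive (fun b => RInt h 0 b) s (h s)).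
  { intros s. apply (is_derive_RInt h _ 0 s).
    apply filter_forall; intros b; apply (RInt_correct (V:=R_CompleteNormedModule)), Hint. apply Hh. }
  assert (HF : is_RInt (fun s => RInt h 0 s + (s - L0) * h s) 0 L0
     (minus ((L0 - L0) * RInt h 0 L0) ((0 - L0) * RInt h 0 0))).
  { apply (is_RInt_derive (fun s => (s - L0) * RInt h 0 s)).
    - intros x _. eapply is_derive_eq.
      apply (is_derive_mult (fun s => s - L0) (fun s => RInt h 0 s)).
      2: apply HD. 2: intros; apply Rmult_comm.
      auto_derive; auto.
      rs. ring.
    - intros x _. apply (continuous_plus (fun s => RInt h 0 s) (fun s => (s - L0) * h s)).
      apply ex_derive_continuous. eexists; apply HD.
      apply (continuous_mult (fun s => s - L0) h).
      apply (continuous_minus (fun s => s) (fun _ => L0)).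
      apply continuous_id. apply continuous_const. apply Hh. }
  assert (HG : is_RInt (fun s => (L0 - s) * h s) 0 L0 (RInt (fun s => (L0 - s) * h s) 0 L0)).
  { apply (RInt_correct (V:=R_CompleteNormedModule)), (ex_RInt_continuous (V:=R_CompleteNormedModule)). intros z _.
    apply (continuous_mult (fun s => L0 - s) h).
    apply (continuous_minus (fun _ => L0) (fun s => s)).
    apply continuous_const. apply continuous_id. apply Hh. }
  eapply is_RInt_eq.
  eapply is_RInt_ext. 2: apply (is_RInt_plus _ _ _ _ _ _ HF HG).
  intros x _. rs. ring.
  rewrite RInt_point. rs. ring.
Qed.

Section Param.
Variable g : R -> R -> R.
Hypothesis Hg : forall s t, continuity_2d_pt g s t.
Hypothesis Hdg : forall s t, ex_derive (fun w => g s w) t.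
Hypothesis Hcdg : forall s t, continuity_2d_pt (fun u v => Derive (fun w => g u w) v) s t.

Lemma param_a s0 t : is_derive (fun tau => RInt (fun sg => g sg tau) 0 s0) t
   (RInt (fun sg => Derive (fun w => g sg w) t) 0 s0).
Proof.
  apply (is_derive_RInt_param (fun tau sg => g sg tau) 0 s0 t).
  - apply filter_forall; intros; apply Hdg.
  - intros sg _. exact (c2d_swap _ _ _ (Hcdg sg t)).
  - apply filter_forall; intros y. apply (ex_RInt_continuous (V:=R_CompleteNormedModule)); intros z _.
    exact (c2d_cont1 _ _ _ (Hg z y)).
Qed.

Lemma param_b L0 t : is_derive (fun tau => RInt (fun sg => (L0 - sg) * g sg tau) 0 L0) t
   (RInt (fun sg => (L0 - sg) * Derive (fun w => g sg w) t) 0 L0).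
Proof.
  eapply is_derive_eq.
  apply (is_derive_RInt_param (fun tau sg => (L0 - sg) * g sg tau) 0 L0 t).
  - apply filter_forall; intros; apply ex_derive_scal; apply Hdg.
  - intros sg _. 
    apply continuity_2d_pt_ext with (f := fun u v => (L0 - v) * Derive (fun w => g v w) u).
    intros; rewrite Derive_scal; reflexivity.
    apply continuity_2d_pt_mult.
    apply continuity_2d_pt_minus. apply continuity_2d_pt_const. apply continuity_2d_pt_id2.
    exact (c2d_swap _ _ _ (Hcdg sg t)).
  - apply filter_forall; intros y. apply (ex_RInt_continuous (V:=R_CompleteNormedModule)); intros z _.
    apply (continuous_mult (fun s => L0 - s) (fun s => g s y)).
    apply (continuous_minus (fun _ => L0) (fun s => s)).
    apply continuous_const. apply continuous_id. exact (c2d_cont1 _ _ _ (Hg z y)).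
  - apply RInt_ext. intros; rewrite Derive_scal; reflexivity.
Qed.

Lemma param_c L0 t : is_RInt (fun s0 => RInt (fun sg => g sg t) 0 s0) 0 L0
   (RInt (fun sg => (L0 - sg) * g sg t) 0 L0).
Proof. apply swap_int. intros; exact (c2d_cont1 _ _ _ (Hg x t)). Qed.

Lemma param_d L0 t : is_RInt (fun s0 => RInt (fun sg => Derive (fun w => g sg w) t) 0 s0) 0 L0
   (RInt (fun sg => (L0 - sg) * Derive (fun w => g sg w) t) 0 L0).
Proof. apply (swap_int (fun sg => Derive (fun w => g sg w) t)). intros; exact (c2d_cont1 _ _ _ (Hcdg x t)). Qed.

End Param.
Lemma comb1 (X Th A B : R -> R) k t dX dT dA dB : is_derive X t dX -> is_derive Th t dT -> is_derive A t dA -> is_derive B t dB -> is_derive (fun tau => k * X tau + cos (Th tau) * A tau - sin (Th tau) * B tau) t (k * dX + (- sin (Th t) * dT) * A t + cos (Th t) * dA - (cos (Th t) * dT * B t + sin (Th t) * dB)).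
Proof. intros. auto_derive. repeat split; eexists; eassumption.
 repeat (erewrite is_derive_unique by eassumption). ring. Qed.
Lemma comb2 (X Th A B : R -> R) k t dX dT dA dB : is_derive X t dX -> is_derive Th t dT -> is_derive A t dA -> is_derive B t dB -> is_derive (fun tau => k * X tau + sin (Th tau) * A tau + cos (Th tau) * B tau) t (k * dX + (cos (Th t) * dT) * A t + sin (Th t) * dA + (- sin (Th t) * dT * B t + cos (Th t) * dB)).
Proof. intros. auto_derive. repeat split; eexists; eassumption.
 repeat (erewrite is_derive_unique by eassumption). ring. Qed.


Lemma C1_d1 f : C1_2 f -> forall x y, ex_derive (fun u => f u y) x.
Proof. intros H x y; apply (H x y). Qed.
Lemma C1_d2 f : C1_2 f -> forall x y, ex_derive (fun v => f x v) y.
Proof. intros H x y; apply (H x y). Qed.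
Lemma C1_c f : C1_2 f -> forall x y, continuity_2d_pt f x y.
Proof. intros H x y; apply (H x y). Qed.
Lemma C1_cd1 f : C1_2 f -> forall x y, continuity_2d_pt (fun u v => Derive (fun w => f w v) u) x y.
Proof. intros H x y; apply (H x y). Qed.
Lemma C1_cd2 f : C1_2 f -> forall x y, continuity_2d_pt (fun u v => Derive (fun w => f u w) v) x y.
Proof. intros H x y; apply (H x y). Qed.
Lemma cont_of_der (q : R -> R) x : ex_derive q x -> continuity_pt q x.
Proof. intros H; apply continuity_pt_filterlim. apply (ex_derive_continuous (V:=R_NormedModule)), H. Qed.

Lemma reg_g eta p th (q dq : R -> R) (Hp : C1_2 p) (Hth : C1_2 th)
  (Hq : forall x, is_derive q x (dq x)) (Hdq : forall x, ex_derive dq x) :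
  (forall s t, continuity_2d_pt (fun s t => stretch eta p s t * q (th s t)) s t) /\
  (forall s t, ex_derive (fun w => stretch eta p s w * q (th s w)) t) /\
  (forall s t, continuity_2d_pt (fun u v => Derive (fun w => stretch eta p u w * q (th u w)) v) s t).
Proof.
  assert (HD : forall u v, is_derive (fun w => stretch eta p u w * q (th u w)) v
     (eta * Derive (fun w => p u w) v * q (th u v) + stretch eta p u v * (Derive (fun w => th u w) v * dq (th u v)))).
  { intros u v. unfold stretch. eapply is_derive_eq.
    apply (is_derive_mult (fun w => 1 + eta * p u w) (fun w => q (th u w)) v (eta * Derive (fun w => p u w) v)).
    - auto_derive; [apply (C1_d2 _ Hp) | ring].
    - apply (is_derive_comp q (fun w => th u w)). apply Hq. apply Derive_correct, (C1_d2 _ Hth).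
    - intros; apply Rmult_comm.
    - rs. ring. }
  split; [|split].
  - intros s t. unfold stretch.
    apply continuity_2d_pt_mult.
    + apply continuity_2d_pt_plus. apply continuity_2d_pt_const.
      apply continuity_2d_pt_mult. apply continuity_2d_pt_const. apply (C1_c _ Hp).
    + apply (continuity_1d_2d_pt_comp q th). apply cont_of_der. eexists; apply Hq. apply (C1_c _ Hth).
  - intros s t. eexists; apply HD.
  - intros s t. eapply continuity_2d_pt_ext.
    intros u v. symmetry. apply is_derive_unique, HD.
    unfold stretch.
    apply continuity_2d_pt_plus.
    + apply continuity_2d_pt_mult. apply continuity_2d_pt_mult. apply continuity_2d_pt_const. apply (C1_cd2 _ Hp).
      apply (continuity_1d_2d_pt_comp q th). apply cont_of_der. eexists; apply Hq. apply (C1_c _ Hth).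
    + apply continuity_2d_pt_mult.
      apply continuity_2d_pt_plus. apply continuity_2d_pt_const.
      apply continuity_2d_pt_mult. apply continuity_2d_pt_const. apply (C1_c _ Hp).
      apply continuity_2d_pt_mult. apply (C1_cd2 _ Hth).
      apply (continuity_1d_2d_pt_comp dq th). apply cont_of_der. apply Hdq. apply (C1_c _ Hth).
Qed.

Lemma reg_cos eta p th (Hp : C1_2 p) (Hth : C1_2 th) :
  (forall s t, continuity_2d_pt (fun s t => stretch eta p s t * cos (th s t)) s t) /\
  (forall s t, ex_derive (fun w => stretch eta p s w * cos (th s w)) t) /\
  (forall s t, continuity_2d_pt (fun u v => Derive (fun w => stretch eta p u w * cos (th u w)) v) s t).
Proof. apply (reg_g eta p th cos (fun x => - sin x)); auto; intros; auto_derive; auto. ring. Qed.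

Lemma reg_sin eta p th (Hp : C1_2 p) (Hth : C1_2 th) :
  (forall s t, continuity_2d_pt (fun s t => stretch eta p s t * sin (th s t)) s t) /\
  (forall s t, ex_derive (fun w => stretch eta p s w * sin (th s w)) t) /\
  (forall s t, continuity_2d_pt (fun u v => Derive (fun w => stretch eta p u w * sin (th u w)) v) s t).
Proof. apply (reg_g eta p th sin cos); auto; intros; auto_derive; auto. ring. Qed.

Lemma rftid1 C v1 v2 c s l : c * c + s * s = 1 ->
  (- C * (v1 * c + v2 * s) * c - C * (v1 * - s + v2 * c) * - s) * l = (- C * l) * v1.
Proof. intros H. transitivity (- C * v1 * l * (c * c + s * s)); [ring | rewrite H; ring]. Qed.
Lemma rftid2 C v1 v2 c s l : c * c + s * s = 1 ->
  (- C * (v1 * c + v2 * s) * s - C * (v1 * - s + v2 * c) * c) * l = (- C * l) * v2.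
Proof. intros H. transitivity (- C * v2 * l * (c * c + s * s)); [ring | rewrite H; ring]. Qed.
Lemma cs1 x : cos x * cos x + sin x * sin x = 1.
Proof. pose proof (sin2_cos2 x). unfold Rsqr in H. lra. Qed.

Lemma part1 (L0 eta : R) (p th : R -> R -> R) (Cpar Cperp : R) (X1 X2 Th : R -> R) :
      admissible L0 eta p th Cpar Cperp X1 X2 Th ->
      Cperp / Cpar = 1 ->
      (forall s0 t, 0 <= s0 <= L0 -> Derive (fun u => p u t) s0 = 0) ->
      force_torque_free L0 eta p th Cpar Cperp X1 X2 Th ->
      forall t, is_derive (Xbar1 L0 eta p th X1 Th) t 0 /\
                is_derive (Xbar2 L0 eta p th X2 Th) t 0.
Proof.
  intros (HL0 & HCp & HCq & Hp & Hth & HX1 & HX2 & HTh & Hpos) Hratio Hunif Hff t.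
  assert (Cperp = Cpar).
  { apply (f_equal (fun x => x * Cpar)) in Hratio. unfold Rdiv in Hratio.
    rewrite Rmult_assoc, Rinv_l, Rmult_1_r in Hratio; lra. }
  subst Cperp.
  assert (Hconst : forall s0 tau, 0 <= s0 <= L0 -> stretch eta p s0 tau = stretch eta p 0 tau).
  { intros s0 tau Hs.
    pose proof (MVT_gen (fun u => p u tau) 0 s0 (fun u => Derive (fun w => p w tau) u)) as M.
    cbv zeta in M. rewrite Rmin_left, Rmax_right in M by lra.
    destruct M as [c [Hc Heq]].
    - intros x _. apply Derive_correct, (C1_d1 _ Hp).
    - intros x _. apply cont_of_der, (C1_d1 _ Hp).
    - rewrite Hunif in Heq by lra. unfold stretch.
      assert (p s0 tau = p 0 tau) by lra. rewrite H; reflexivity. }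
  set (lam := fun tau => stretch eta p 0 tau).
  assert (Hlam : forall tau, 0 < lam tau) by (intros; apply Hpos; lra).
  assert (Hin : forall x, Rmin 0 L0 < x < Rmax 0 L0 -> 0 <= x <= L0).
  { intros x Hx; rewrite Rmin_left, Rmax_right in Hx by lra; lra. }
  destruct (reg_cos eta p th Hp Hth) as (Hg1 & Hdg1 & Hcdg1).
  destruct (reg_sin eta p th Hp Hth) as (Hg2 & Hdg2 & Hcdg2).
  set (g1 := fun s t => stretch eta p s t * cos (th s t)) in *.
  set (g2 := fun s t => stretch eta p s t * sin (th s t)) in *.
  set (A1 := fun tau => RInt (fun sg => (L0 - sg) * g1 sg tau) 0 L0).
  set (A2 := fun tau => RInt (fun sg => (L0 - sg) * g2 sg tau) 0 L0).
  set (A1' := RInt (fun sg => (L0 - sg) * Derive (fun w => g1 sg w) t) 0 L0).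
  set (A2' := RInt (fun sg => (L0 - sg) * Derive (fun w => g2 sg w) t) 0 L0).
  set (D1 := fun s0 => RInt (fun sg => Derive (fun w => g1 sg w) t) 0 s0).
  set (D2 := fun s0 => RInt (fun sg => Derive (fun w => g2 sg w) t) 0 s0).
  assert (Hxb1 : forall tau, is_RInt (fun s0 => xbody1 eta p th s0 tau) 0 L0 (A1 tau))
    by (intros; exact (param_c g1 Hg1 L0 tau)).
  assert (Hxb2 : forall tau, is_RInt (fun s0 => xbody2 eta p th s0 tau) 0 L0 (A2 tau))
    by (intros; exact (param_c g2 Hg2 L0 tau)).
  assert (HdA1 : is_derive A1 t A1') by exact (param_b g1 Hg1 Hdg1 Hcdg1 L0 t).
  assert (HdA2 : is_derive A2 t A2') by exact (param_b g2 Hg2 Hdg2 Hcdg2 L0 t).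
  assert (HD1 : forall s0, is_derive (fun tau => xbody1 eta p th s0 tau) t (D1 s0))
    by (intros; exact (param_a g1 Hg1 Hdg1 Hcdg1 s0 t)).
  assert (HD2 : forall s0, is_derive (fun tau => xbody2 eta p th s0 tau) t (D2 s0))
    by (intros; exact (param_a g2 Hg2 Hdg2 Hcdg2 s0 t)).
  assert (HiD1 : is_RInt D1 0 L0 A1') by exact (param_d g1 Hcdg1 L0 t).
  assert (HiD2 : is_RInt D2 0 L0 A2') by exact (param_d g2 Hcdg2 L0 t).
  set (dX1 := Derive X1 t). set (dX2 := Derive X2 t). set (dT := Derive Th t).
  assert (HdX1 : is_derive X1 t dX1) by (apply Derive_correct, HX1).
  assert (HdX2 : is_derive X2 t dX2) by (apply Derive_correct, HX2).
  assert (HdT : is_derive Th t dT) by (apply Derive_correct, HTh).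

  assert (HV1 : forall s0, vel1 X1 Th eta p th s0 t = 1 * dX1 + (- sin (Th t) * dT) * xbody1 eta p th s0 t
     + cos (Th t) * D1 s0 - (cos (Th t) * dT * xbody2 eta p th s0 t + sin (Th t) * D2 s0)).
  { intros s0. unfold vel1. apply is_derive_unique.
    eapply is_derive_ext.
    2: exact (comb1 X1 Th (fun tau => xbody1 eta p th s0 tau) (fun tau => xbody2 eta p th s0 tau) 1 t _ _ _ _ HdX1 HdT (HD1 s0) (HD2 s0)).
    intros; unfold xlab1; simpl; ring. }
  assert (HV2 : forall s0, vel2 X2 Th eta p th s0 t = 1 * dX2 + (cos (Th t) * dT) * xbody1 eta p th s0 t
     + sin (Th t) * D1 s0 + (- sin (Th t) * dT * xbody2 eta p th s0 t + cos (Th t) * D2 s0)).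
  { intros s0. unfold vel2. apply is_derive_unique.
    eapply is_derive_ext.
    2: exact (comb2 X2 Th (fun tau => xbody1 eta p th s0 tau) (fun tau => xbody2 eta p th s0 tau) 1 t _ _ _ _ HdX2 HdT (HD1 s0) (HD2 s0)).
    intros; unfold xlab2; simpl; ring. }
  set (G1 := fun tau => L0 * X1 tau + cos (Th tau) * A1 tau - sin (Th tau) * A2 tau).
  set (G2 := fun tau => L0 * X2 tau + sin (Th tau) * A1 tau + cos (Th tau) * A2 tau).
  assert (HG1 : forall tau, is_RInt (fun s0 => xlab1 X1 Th eta p th s0 tau) 0 L0 (G1 tau)).
  { intros tau. eapply is_RInt_eq. eapply is_RInt_ext.
    2: apply (is_RInt_minus _ _ _ _ _ _ (is_RInt_plus _ _ _ _ _ _ (is_RInt_const (V:=R_NormedModule) 0 L0 (X1 tau))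
          (is_RInt_scal _ _ _ (cos (Th tau)) _ (Hxb1 tau))) (is_RInt_scal _ _ _ (sin (Th tau)) _ (Hxb2 tau))).
    intros; unfold xlab1; rg; ring.
    unfold G1; rg; ring. }
  assert (HG2 : forall tau, is_RInt (fun s0 => xlab2 X2 Th eta p th s0 tau) 0 L0 (G2 tau)).
  { intros tau. eapply is_RInt_eq. eapply is_RInt_ext.
    2: apply (is_RInt_plus _ _ _ _ _ _ (is_RInt_plus _ _ _ _ _ _ (is_RInt_const (V:=R_NormedModule) 0 L0 (X2 tau))
          (is_RInt_scal _ _ _ (sin (Th tau)) _ (Hxb1 tau))) (is_RInt_scal _ _ _ (cos (Th tau)) _ (Hxb2 tau))).
    intros; unfold xlab2; rg; ring.
    unfold G2; rg; ring. }
  set (dG1 := L0 * dX1 + (- sin (Th t) * dT) * A1 t + cos (Th t) * A1' - (cos (Th t) * dT * A2 t + sin (Th t) * A2')).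
  set (dG2 := L0 * dX2 + (cos (Th t) * dT) * A1 t + sin (Th t) * A1' + (- sin (Th t) * dT * A2 t + cos (Th t) * A2')).
  assert (HdG1 : is_derive G1 t dG1) by exact (comb1 X1 Th A1 A2 L0 t _ _ _ _ HdX1 HdT HdA1 HdA2).
  assert (HdG2 : is_derive G2 t dG2) by exact (comb2 X2 Th A1 A2 L0 t _ _ _ _ HdX2 HdT HdA1 HdA2).
  assert (HiV1 : is_RInt (fun s0 => vel1 X1 Th eta p th s0 t) 0 L0 dG1).
  { eapply is_RInt_eq. eapply is_RInt_ext.
    2: apply (is_RInt_minus _ _ _ _ _ _
         (is_RInt_plus _ _ _ _ _ _ (is_RInt_plus _ _ _ _ _ _ (is_RInt_const (V:=R_NormedModule) 0 L0 dX1)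
            (is_RInt_scal _ _ _ (- sin (Th t) * dT) _ (Hxb1 t))) (is_RInt_scal _ _ _ (cos (Th t)) _ HiD1))
         (is_RInt_plus _ _ _ _ _ _ (is_RInt_scal _ _ _ (cos (Th t) * dT) _ (Hxb2 t)) (is_RInt_scal _ _ _ (sin (Th t)) _ HiD2))).
    intros; rewrite HV1; rg; ring.
    unfold dG1; rg; ring. }
  assert (HiV2 : is_RInt (fun s0 => vel2 X2 Th eta p th s0 t) 0 L0 dG2).
  { eapply is_RInt_eq. eapply is_RInt_ext.
    2: apply (is_RInt_plus _ _ _ _ _ _
         (is_RInt_plus _ _ _ _ _ _ (is_RInt_plus _ _ _ _ _ _ (is_RInt_const (V:=R_NormedModule) 0 L0 dX2)
            (is_RInt_scal _ _ _ (cos (Th t) * dT) _ (Hxb1 t))) (is_RInt_scal _ _ _ (sin (Th t)) _ HiD1))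
         (is_RInt_plus _ _ _ _ _ _ (is_RInt_scal _ _ _ (- sin (Th t) * dT) _ (Hxb2 t)) (is_RInt_scal _ _ _ (cos (Th t)) _ HiD2))).
    intros; rewrite HV2; rg; ring.
    unfold dG2; rg; ring. }
  destruct (Hff t) as [F1 [F2 _]].
  assert (Z1 : dG1 = 0).
  { assert (H : is_RInt (fun s0 => rft1 Cpar Cpar X1 X2 Th eta p th s0 t * stretch eta p s0 t) 0 L0
                 (scal (- Cpar * lam t) dG1)).
    { eapply is_RInt_ext. 2: apply (is_RInt_scal _ _ _ _ _ HiV1).
      intros x Hx. rewrite (Hconst x t (Hin x Hx)).
      unfold rft1, epar1, epar2, eperp1, eperp2; cbv zeta.
      symmetry. etransitivity. apply rftid1, cs1. reflexivity. }
    rewrite (is_RInt_unique _ _ _ _ H) in F1. rg.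
    pose proof (Hlam t). apply Rmult_integral in F1. destruct F1 as [F|F]; [|exact F].
    exfalso. assert (0 < Cpar * lam t) by (apply Rmult_lt_0_compat; lra). lra. }
  assert (Z2 : dG2 = 0).
  { assert (H : is_RInt (fun s0 => rft2 Cpar Cpar X1 X2 Th eta p th s0 t * stretch eta p s0 t) 0 L0
                 (scal (- Cpar * lam t) dG2)).
    { eapply is_RInt_ext. 2: apply (is_RInt_scal _ _ _ _ _ HiV2).
      intros x Hx. rewrite (Hconst x t (Hin x Hx)).
      unfold rft2, epar1, epar2, eperp1, eperp2; cbv zeta.
      symmetry. etransitivity. apply rftid2, cs1. reflexivity. }
    rewrite (is_RInt_unique _ _ _ _ H) in F2. rg.
    pose proof (Hlam t). apply Rmult_integral in F2. destruct F2 as [F|F]; [|exact F].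
    exfalso. assert (0 < Cpar * lam t) by (apply Rmult_lt_0_compat; lra). lra. }
  assert (Hcur : forall tau, curlen L0 eta p tau = scal (L0 - 0) (lam tau)).
  { intros tau. unfold curlen. apply (is_RInt_unique (V:=R_CompleteNormedModule)).
    eapply is_RInt_ext; [|apply (is_RInt_const (V:=R_NormedModule))]. intros x Hx; simpl; symmetry; apply Hconst, Hin, Hx. }
  assert (HXb1 : forall tau, Xbar1 L0 eta p th X1 Th tau = / L0 * G1 tau).
  { intros tau. unfold Xbar1. rewrite Hcur.
    rewrite (is_RInt_unique (fun s0 => xlab1 X1 Th eta p th s0 tau * stretch eta p s0 tau) 0 L0 (scal (lam tau) (G1 tau))).
    2: { eapply is_RInt_ext; [|apply (is_RInt_scal _ _ _ _ _ (HG1 tau))].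
         intros x Hx; rewrite (Hconst x tau (Hin x Hx)); rg; unfold lam; ring. }
    pose proof (Hlam tau). rg. field. split; lra. }
  assert (HXb2 : forall tau, Xbar2 L0 eta p th X2 Th tau = / L0 * G2 tau).
  { intros tau. unfold Xbar2. rewrite Hcur.
    rewrite (is_RInt_unique (fun s0 => xlab2 X2 Th eta p th s0 tau * stretch eta p s0 tau) 0 L0 (scal (lam tau) (G2 tau))).
    2: { eapply is_RInt_ext; [|apply (is_RInt_scal _ _ _ _ _ (HG2 tau))].
         intros x Hx; rewrite (Hconst x tau (Hin x Hx)); rg; unfold lam; ring. }
    pose proof (Hlam tau). rg. field. split; lra. }
  split.
  - apply (is_derive_ext (fun tau => / L0 * G1 tau)). intros; symmetry; apply HXb1.
    eapply is_derive_eq. apply is_derive_scal, HdG1. rewrite Z1; apply Rmult_0_r.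
  - apply (is_derive_ext (fun tau => / L0 * G2 tau)). intros; symmetry; apply HXb2.
    eapply is_derive_eq. apply is_derive_scal, HdG2. rewrite Z2; apply Rmult_0_r.
Qed.

Ltac req := match goal with |- ?a = ?b => change (@eq R a b) end.
Definition ex_p (s t : R) : R := (s - 1/2) * sin t.
Definition ex_th (s t : R) : R := 0.
Definition ex_X1 (t : R) : R := sin t / 12.
Definition ex_X2 (t : R) : R := 0.
Definition ex_Th (t : R) : R := 0.

Lemma RInt_poly (f F : R -> R) a b : (forall x, is_derive F x (f x)) -> (forall x, ex_derive f x) ->
  @eq R (RInt f a b) (F b - F a).
Proof.
  intros H1 H2. apply (is_RInt_unique (V:=R_CompleteNormedModule)).
  eapply is_RInt_eq. apply (is_RInt_derive (V:=R_CompleteNormedModule) F f).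
  intros; apply H1. intros; apply (ex_derive_continuous (V:=R_NormedModule)), H2.
  rg; ring.
Qed.

Lemma ex_xb1 s0 t : xbody1 1 ex_p ex_th s0 t = s0 + sin t * (s0 * s0 / 2 - s0 / 2).
Proof.
  unfold xbody1, stretch, ex_p, ex_th.
  rewrite (RInt_poly _ (fun x => x + sin t * (x * x / 2 - x / 2))).
  - cbv beta; req; field.
  - intros x. auto_derive; auto. rewrite cos_0. field.
  - intros x. auto_derive; auto.
Qed.

Lemma ex_xb2 s0 t : xbody2 1 ex_p ex_th s0 t = 0.
Proof.
  unfold xbody2, stretch, ex_p, ex_th.
  rewrite (RInt_poly _ (fun x => 0)); cbv beta.
  - cbv beta; req; field.
  - intros x. auto_derive; auto. rewrite sin_0. ring.
  - intros x. auto_derive; auto.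
Qed.

Lemma ex_xl1 s0 t : xlab1 ex_X1 ex_Th 1 ex_p ex_th s0 t = sin t / 12 + (s0 + sin t * (s0 * s0 / 2 - s0 / 2)).
Proof. unfold xlab1. rewrite ex_xb1, ex_xb2. unfold ex_X1, ex_Th. rewrite cos_0, sin_0. ring. Qed.

Lemma ex_xl2 s0 t : xlab2 ex_X2 ex_Th 1 ex_p ex_th s0 t = 0.
Proof. unfold xlab2. rewrite ex_xb1, ex_xb2. unfold ex_X2, ex_Th. rewrite cos_0, sin_0. ring. Qed.

Lemma ex_v1 s0 t : vel1 ex_X1 ex_Th 1 ex_p ex_th s0 t = cos t / 12 + cos t * (s0 * s0 / 2 - s0 / 2).
Proof.
  unfold vel1. apply is_derive_unique.
  apply (is_derive_ext (fun tau => sin tau / 12 + (s0 + sin tau * (s0 * s0 / 2 - s0 / 2)))).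
  intros; symmetry; apply ex_xl1.
  auto_derive; auto. req; field.
Qed.

Lemma ex_v2 s0 t : vel2 ex_X2 ex_Th 1 ex_p ex_th s0 t = 0.
Proof.
  unfold vel2. apply is_derive_unique.
  apply (is_derive_ext (fun tau => 0)).
  intros; symmetry; apply ex_xl2.
  auto_derive; auto.
Qed.

Lemma ex_rft1 s0 t : rft1 1 1 ex_X1 ex_X2 ex_Th 1 ex_p ex_th s0 t = - (cos t / 12 + cos t * (s0 * s0 / 2 - s0 / 2)).
Proof.
  unfold rft1, epar1, epar2, eperp1, eperp2; cbv zeta. rewrite ex_v1, ex_v2.
  unfold ex_Th, ex_th. rewrite Rplus_0_r, cos_0, sin_0. ring.
Qed.

Lemma ex_rft2 s0 t : rft2 1 1 ex_X1 ex_X2 ex_Th 1 ex_p ex_th s0 t = 0.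
Proof.
  unfold rft2, epar1, epar2, eperp1, eperp2; cbv zeta. rewrite ex_v1, ex_v2.
  unfold ex_Th, ex_th. rewrite Rplus_0_r, cos_0, sin_0. ring.
Qed.

Lemma ex_ff : force_torque_free 1 1 ex_p ex_th 1 1 ex_X1 ex_X2 ex_Th.
Proof.
  intros t. split; [|split].
  - erewrite RInt_ext. 2: { intros x _. rewrite ex_rft1. unfold stretch, ex_p. reflexivity. }
    rewrite (RInt_poly _ (fun s => - cos t * (s / 12 + s * s * s / 6 - s * s / 4
              + sin t * ((s * s - s) / 24 + (s * s - s) * (s * s - s) / 8)))); cbv beta.
    + cbv beta; req; field.
    + intros x. auto_derive; auto. req; field.
    + intros x. auto_derive; auto.
  - erewrite RInt_ext. 2: { intros x _. rewrite ex_rft2, Rmult_0_l. reflexivity. }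
    rewrite (RInt_poly _ (fun s => 0)); cbv beta. req; ring. intros; auto_derive; auto; req; field. intros; auto_derive; auto.
  - rewrite (RInt_ext _ (fun _ => 0)).
    + rewrite (RInt_poly _ (fun s => 0)); cbv beta. req; ring.
      intros; auto_derive; auto. intros; auto_derive; auto.
    + intros x _. unfold rftb1, rftb2. rewrite ex_rft2, ex_xb2.
      unfold ex_Th. rewrite sin_0. req; ring.
Qed.

Lemma ex_curlen t : curlen 1 1 ex_p t = 1.
Proof.
  unfold curlen, stretch, ex_p.
  rewrite (RInt_poly _ (fun x => x + sin t * (x * x / 2 - x / 2))).
  - cbv beta; req; field.
  - intros x. auto_derive; auto. req; field.
  - intros x. auto_derive; auto.
Qed.

Lemma ex_Xbar1 t : Xbar1 1 1 ex_p ex_th ex_X1 ex_Th t = sin t / 12 + 1 / 2.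
Proof.
  unfold Xbar1. rewrite ex_curlen.
  erewrite RInt_ext. 2: { intros x _. rewrite ex_xl1. unfold stretch, ex_p. reflexivity. }
  rewrite (RInt_poly _ (fun s => sin t / 12 * (s + sin t * (s * s / 2 - s / 2))
       + (s + sin t * (s * s / 2 - s / 2)) * (s + sin t * (s * s / 2 - s / 2)) / 2)).
  - cbv beta; req; field.
  - intros x. auto_derive; auto. req; field.
  - intros x. auto_derive; auto.
Qed.

Lemma ex_Xbar2 t : Xbar2 1 1 ex_p ex_th ex_X2 ex_Th t = 0.
Proof.
  unfold Xbar2. rewrite ex_curlen.
  erewrite RInt_ext. 2: { intros x _. rewrite ex_xl2, Rmult_0_l. reflexivity. }
  rewrite (RInt_poly _ (fun s => 0)); cbv beta. req; field.
  intros; auto_derive; auto; req; field. intros; auto_derive; auto.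
Qed.

Lemma ex_C1p : C1_2 ex_p.
Proof.
  intros x y. unfold ex_p. split; [|split; [|split; [|split]]].
  - auto_derive; auto.
  - auto_derive; auto.
  - apply continuity_2d_pt_mult.
    apply continuity_2d_pt_minus. apply continuity_2d_pt_id1. apply continuity_2d_pt_const.
    apply (continuity_1d_2d_pt_comp sin (fun _ v => v)). apply continuity_sin. apply continuity_2d_pt_id2.
  - eapply continuity_2d_pt_ext. intros u v. symmetry. apply is_derive_unique.
    apply (is_derive_eq _ _ (1 * sin v)). auto_derive; auto; try (req; field). reflexivity.
    apply continuity_2d_pt_mult. apply continuity_2d_pt_const.
    apply (continuity_1d_2d_pt_comp sin (fun _ v => v)). apply continuity_sin. apply continuity_2d_pt_id2.
  - eapply continuity_2d_pt_ext. intros u v. symmetry. apply is_derive_unique.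
    apply (is_derive_eq _ _ ((u - 1/2) * cos v)). auto_derive; auto; try (req; field). reflexivity.
    apply continuity_2d_pt_mult.
    apply continuity_2d_pt_minus. apply continuity_2d_pt_id1. apply continuity_2d_pt_const.
    apply (continuity_1d_2d_pt_comp cos (fun _ v => v)). apply continuity_cos. apply continuity_2d_pt_id2.
Qed.

Lemma ex_C1th : C1_2 ex_th.
Proof.
  intros x y. unfold ex_th. split; [|split; [|split; [|split]]].
  - auto_derive; auto.
  - auto_derive; auto.
  - apply continuity_2d_pt_const.
  - eapply continuity_2d_pt_ext. intros u v. symmetry. apply Derive_const. apply continuity_2d_pt_const.
  - eapply continuity_2d_pt_ext. intros u v. symmetry. apply Derive_const. apply continuity_2d_pt_const.
Qed.

Lemma part2 :
  (exists (L0 eta : R) (p th : R -> R -> R) (Cpar Cperp : R) (X1 X2 Th : R -> R),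
      admissible L0 eta p th Cpar Cperp X1 X2 Th /\
      Cperp / Cpar = 1 /\
      (exists s0 t, 0 <= s0 <= L0 /\ Derive (fun u => p u t) s0 <> 0) /\
      force_torque_free L0 eta p th Cpar Cperp X1 X2 Th /\
      exists t v1 v2, is_derive (Xbar1 L0 eta p th X1 Th) t v1 /\
                      is_derive (Xbar2 L0 eta p th X2 Th) t v2 /\
                      (v1 <> 0 \/ v2 <> 0)).
Proof.
  exists 1, 1, ex_p, ex_th, 1, 1, ex_X1, ex_X2, ex_Th.
  split; [|split; [|split; [|split]]].
  - unfold admissible. split; [lra|split; [lra|split; [lra|split; [|split; [|split; [|split; [|split]]]]]]].
    + apply ex_C1p.
    + apply ex_C1th.
    + intros t; unfold ex_X1; auto_derive; auto.
    + intros t; unfold ex_X2; auto_derive; auto.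
    + intros t; unfold ex_Th; auto_derive; auto.
    + intros s0 t Hs. unfold stretch, ex_p. pose proof (SIN_bound t). nra.
  - cbv beta; req; field.
  - exists 0, (PI / 2). split; [lra|].
    rewrite (is_derive_unique _ _ (sin (PI / 2))). rewrite sin_PI2; lra.
    unfold ex_p. auto_derive; auto. req; field.
  - apply ex_ff.
  - exists 0, (1 / 12), 0. split; [|split].
    + apply (is_derive_ext (fun t => sin t / 12 + 1 / 2)). intros; symmetry; apply ex_Xbar1.
      auto_derive; auto. rewrite cos_0. field.
    + apply (is_derive_ext (fun t => 0)). intros; symmetry; apply ex_Xbar2.
      auto_derive; auto.
    + left; lra.
Qed.

Theorem proposition1 :
  (* (i) uniform compression, isotropic drag: no net motion *)
  (forall (L0 eta : R) (p th : R -> R -> R) (Cpar Cperp : R) (X1 X2 Th : R -> R),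
      admissible L0 eta p th Cpar Cperp X1 X2 Th ->
      Cperp / Cpar = 1 ->
      (forall s0 t, 0 <= s0 <= L0 -> Derive (fun u => p u t) s0 = 0) ->
      force_torque_free L0 eta p th Cpar Cperp X1 X2 Th ->
      forall t, is_derive (Xbar1 L0 eta p th X1 Th) t 0 /\
                is_derive (Xbar2 L0 eta p th X2 Th) t 0)
  /\
  (* (ii) non-uniform compression, isotropic drag: net motion is possible *)
  (exists (L0 eta : R) (p th : R -> R -> R) (Cpar Cperp : R) (X1 X2 Th : R -> R),
      admissible L0 eta p th Cpar Cperp X1 X2 Th /\
      Cperp / Cpar = 1 /\
      (exists s0 t, 0 <= s0 <= L0 /\ Derive (fun u => p u t) s0 <> 0) /\
      force_torque_free L0 eta p th Cpar Cperp X1 X2 Th /\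
      exists t v1 v2, is_derive (Xbar1 L0 eta p th X1 Th) t v1 /\
                      is_derive (Xbar2 L0 eta p th X2 Th) t v2 /\
                      (v1 <> 0 \/ v2 <> 0)).
Proof.
  split.
  - exact part1.
  - exact part2.
Qed.
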